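(* Assume the setting of the context and suppose that condition (A1)(d) holds. Then for any compact interval $I\subset(0,\infty)$, $x\in F$ and $r>0$, \[\lim_{n\rightarrow\infty}\mathbf{P}_{\rho}^{G^n}\left(X^n_{\lfloor \gamma(n)t\rfloor+i}\in B_E(x,r)\right)=\int_{B_F(x,r)}q_t(y)\nu(dy)\] uniformly for $t\in I$, $i\in\{0,1\}$.
   Context: Let $(E,d_E)$ be a metric space and $F\subseteq E$ such that $F\cap\overline{B}_E(x,r)$ is compact for all $x\in E$, $r>0$ ($\overline{B}_E$, $B_E$ closed and open balls in $E$). Let $d_F:=d_E|_{F\times F}$, $B_F(x,r)$ the open ball in $(F,d_F)$, $\rho\in F$, $\nu$ a Radon measure of full support on $(F,d_F)$ (extended to $E$ by $\nu(A):=\nu(A\cap F)$), and $(q_t(x))_{x\in F,t>0}$ jointly continuous in $(t,x)$ with $q_t\ge0$, $\int_Fq_t\,d\nu=1$. For a locally finite connected graph $G$ with symmetric edge weights $\mu^G_{xy}$ ($>0$ iff $\{x,y\}$ is an edge), the discrete time simple random walk $X^G$ has transition probabilities $P_G(x,y)=\mu^G_{xy}/\sum_z\mu^G_{xz}$ and law $\mathbf{P}^G_x$ from $x$. Let $(G^n)_{n\ge1}$ be locally finite connected graphs with at least two vertices, $V(G^n)\subseteq E$, distinguished vertex $\rho$; write $X^n:=X^{G^n}$. Let $(\gamma(n))$ be a non-negative sequence diverging to $\infty$. Condition (A1)(d): for every compact interval $I\subset(0,\infty)$, $x\in F$, $r>0$, $\lim_n\mathbf{P}^{G^n}_\rho(X^n_{\lfloor\gamma(n)t\rfloor}\in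 B_E(x,r))=\int_{B_F(x,r)}q_t(y)\nu(dy)$ uniformly for $t\in I$. *)

(* Defs.v *)
From HB Require Import structures.
From mathcomp Require Import all_boot all_order all_algebra.
From mathcomp Require Import all_classical all_reals all_analysis.
From Stdlib Require Import Relation_Operators.
Set Implicit Arguments. Unset Strict Implicit. Unset Printing Implicit Defensive.
Import Order.TTheory GRing.Theory Num.Theory.
Local Open Scope classical_set_scope.
Local Open Scope ring_scope.

(** A metric space with a distinguished point (needed only so that the
    library's generated sigma-algebra applies; E is nonempty anyway since it
    contains rho). *)
#[short(type="pointedMetricType")]
HB.structure Definition PointedMetric (K : numDomainType) :=
  { M of Metric K M & isPointed M }.

Notation borel_of E := (g_sigma_algebraType (@open E)).

Definition cball (R : realType) (E : pointedMetricType R) (x : E) (r : R) : set E :=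
  [set y | mdist x y <= r].

(** Radon measure of full support on (F, d_F), viewed (as in the paper)
    as a measure on E via nu(A) := nu(A ∩ F):
    - nu is concentrated on F (extension convention);
    - locally finite: every x in F has an open ball B_F(x,r) of finite mass;
    - inner regular: nu(A) = sup { nu(K) : K compact, K ⊆ A ∩ F };
    - full support: every nonempty open ball B_F(x,r) (x in F) has positive mass. *)
Definition radon_full_support (R : realType) (E : pointedMetricType R) (F : set E)
    (nu : {measure set (borel_of E) -> \bar R}) : Prop :=
  [/\ (forall A : set (borel_of E), measurable A -> nu A = nu (A `&` F)),
      (forall x, F x -> exists2 r : R, 0 < r & (nu (ball x r `&` F) < +oo)%E),
      (forall A : set (borel_of E), measurable A ->
         nu A = ereal_sup [set nu K | K in
                 [set K : set (borel_of E) | K `<=` A `&` F /\ @compact E K]]) &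
      (forall x (r : R), F x -> 0 < r -> (0 < nu (ball x r `&` F))%E)].

(** Locally finite connected weighted graph with vertices in E, given by
    the vertex set V, symmetric weights mu (mu x y > 0 iff {x,y} is an edge)
    and, for each vertex x, the (duplicate-free, finite) list nbr x of its
    neighbours (local finiteness). *)
Definition adjacent (R : realType) (E : Type) (mu : E -> E -> R) (x y : E) : Prop :=
  0 < mu x y.

Definition weighted_graph (R : realType) (E : eqType) (V : set E)
    (mu : E -> E -> R) (nbr : E -> seq E) : Prop :=
  [/\ (forall x y, mu x y = mu y x),
      (forall x y, 0 <= mu x y),
      (forall x y, 0 < mu x y -> V x /\ V y),
      (forall x y, V x -> (0 < mu x y <-> y \in nbr x)) &
      (forall x, uniq (nbr x))].

Definition graph_connected (R : realType) (E : Type) (V : set E) (mu : E -> E -> R) : Prop :=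
  forall x y, V x -> V y -> clos_refl_trans E (adjacent mu) x y.

Definition at_least_two_vertices (E : Type) (V : set E) : Prop :=
  exists x y, [/\ V x, V y & x <> y].

Definition trans_prob (R : realType) (E : eqType) (mu : E -> E -> R)
    (nbr : E -> seq E) (x y : E) : R :=
  mu x y / \sum_(z <- nbr x) mu x z.

(** P^G_x (X^G_k ∈ A), the law of the discrete-time simple random walk,
    defined through the Markov (Chapman–Kolmogorov) recursion on the
    first step. *)
Fixpoint walk_prob (R : realType) (E : eqType) (mu : E -> E -> R)
    (nbr : E -> seq E) (k : nat) (x : E) (A : set E) : R :=
  match k with
  | 0 => (x \in A)%:R
  | k'.+1 => \sum_(z <- nbr x) trans_prob mu nbr x z * walk_prob mu nbr k' z A
  end.

(* Main.v *)
Require Import Defs.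
From HB Require Import structures.
From mathcomp Require Import all_boot all_order all_algebra.
From mathcomp Require Import all_classical all_reals all_analysis.
Import Order.TTheory GRing.Theory Num.Theory.
Import numFieldTopology.Exports.
Local Open Scope classical_set_scope.
Local Open Scope ring_scope.
From mathcomp Require Import lra.
Lemma qcont_ed (R : realType) (E : pointedMetricType R) (F : set E) (q : R -> E -> R) :
  {within [set p : R * E | 0 < p.1 /\ F p.2], continuous (fun p : R * E => q p.1 p.2)} ->
  forall t y, 0 < t -> F y -> forall e, 0 < e -> exists2 eta, 0 < eta &
    forall t' y', 0 < t' -> F y' -> `|t - t'| < eta -> mdist y y' < eta ->
      `|q t y - q t' y'| < e.
Proof.
move=> /subspace_continuousP hq t y t0 Fy e e0.
have := hq (t, y) (conj t0 Fy).
move=> /cvgrPdist_lt /(_ e e0).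
rewrite /within /=. move=> /nbhs_ballP [eta eta0 H].
exists eta => // t' y' t'0 Fy' h1 h2.
apply: (H (t', y')); last by split.
split => /=. by rewrite /ball /=.  by rewrite ballEmdist.
Qed.
Lemma meas_g (R : realType) (E : pointedMetricType R) (A : set (borel_of E)) (g : E -> R) :
  measurable A ->
  (forall y, A y -> forall e, 0 < e -> exists2 eta, 0 < eta &
     forall y', A y' -> mdist y y' < eta -> `|g y - g y'| < e) ->
  measurable_fun A (g : borel_of E -> R).
Proof.
move=> mA hg.
have cg : {within (A : set E), continuous g}.
  apply/subspace_continuousP => y Ay.
  apply/cvgrPdist_lt => e e0.
  have [eta eta0 H] := hg y Ay e e0.
  rewrite /within /=; apply/nbhs_ballP; exists eta => // y' by' Ay'.
  by apply: H => //; move: by'; rewrite ballEmdist.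
move: cg => /continuousP cf.
apply: (measurability _ (measurable_realfun.RGenOpens.measurableE R)).
move=> _ [_ [a [b ->] <-]].
have := cf `]a, b[%classic (@interval_open R (BRight a) (BLeft b) isT isT).
move=> h. have := (open_subspaceP (A : set E) _).1 h. move=> [V oV VD].
rewrite setIC -VD.
apply: measurableI => //.
exact: sub_sigma_algebra.
Qed.
Lemma bigcup_seq_fin (R : realType) (E : pointedMetricType R)
  (nu : {measure set (borel_of E) -> \bar R}) (P : E -> set (borel_of E)) (s : seq E) :
  (forall i, i \in s -> measurable (P i) /\ (nu (P i) < +oo)%E) ->
  measurable (\bigcup_(i in [set` s]) P i) /\ (nu (\bigcup_(i in [set` s]) P i) < +oo)%E.
Proof.
elim: s => [|a s IH] H.
  have -> : \bigcup_(i in [set` [::]]) P i = set0.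
    by apply/seteqP; split => z // [i]; rewrite /= in_nil.
  by rewrite measure0; split.
have -> : \bigcup_(i in [set` a :: s]) P i = P a `|` \bigcup_(i in [set` s]) P i.
  apply/seteqP; split => z.
    case=> i /=; rewrite in_cons => /orP[/eqP -> | iin] Pz; first by left.
    by right; exists i.
  case=> [Pz|[i /= iin Pz]]; first by exists a => //=; rewrite mem_head.
  by exists i => //=; rewrite in_cons iin orbT.
have [ma fa] := H a (mem_head _ _).
have [ms fs] : measurable (\bigcup_(i in [set` s]) P i) /\ (nu (\bigcup_(i in [set` s]) P i) < +oo)%E.
  by apply: IH => i iin; apply: H; rewrite in_cons iin orbT.
split; first exact: measurableU.
apply: (le_lt_trans (measureU2 nu ma ms)).
by rewrite lte_add_pinfty.
Qed.

Lemma mball_open (R : realType) (E : pointedMetricType R) (x : E) (r : R) : open (ball x r).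
Proof.
rewrite openE => y; rewrite ballEmdist /= => h.
rewrite /interior; apply/nbhs_ballP.
exists (r - mdist x y); first by rewrite /= subr_gt0.
move=> z; rewrite !ballEmdist /= => hz.
have := metric_triangle x y z. lra.
Qed.

Lemma fin_meas (R : realType) (E : pointedMetricType R) (F : set E)
  (nu : {measure set (borel_of E) -> \bar R}) (K : set E) :
  radon_full_support F nu -> compact K -> K `<=` F ->
  forall A : set (borel_of E), measurable A -> A `<=` K -> (nu A < +oo)%E.
Proof.
case=> hF hloc _ _ cK KF A mA AK.
have hr : forall y, exists r : R, F y -> 0 < r /\ (nu (ball y r `&` F) < +oo)%E.
  move=> y; case: (pselect (F y)) => Fy.
    by have [r r0 h] := hloc y Fy; exists r.
  by exists 1.
have [rr hrr] := choice hr.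
move: cK; rewrite compact_cover => cK.
have [D' D'K cov] := cK E K (fun y => ball y (rr y)) (fun i Ki => mball_open _ _ i (rr i))
  (fun y Ky => ex_intro2 _ (fun i => ball i (rr i) y) y Ky (ballxx _ (hrr y (KF y Ky)).1)).
have hs : forall i, i \in finmap.enum_fset D' -> measurable (ball i (rr i) : set (borel_of E)) /\ (nu (ball i (rr i)) < +oo)%E.
  move=> i iin.
  have Ki : K i by have := D'K i iin; rewrite inE.
  have mb : measurable (ball i (rr i) : set (borel_of E)) by apply: sub_sigma_algebra; exact: mball_open.
  split => //; rewrite hF //. have := (hrr i (KF i Ki)).2. by [].
have [mU fU] := @bigcup_seq_fin R E nu (fun y => ball y (rr y)) (finmap.enum_fset D') hs.
apply: le_lt_trans fU; apply: le_measure; rewrite ?inE //.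
by move=> z Az; apply: cov; apply: AK.
Qed.
Lemma inv_small (R : realType) (eta : R) : 0 < eta ->
  exists N : nat, forall n, (N <= n)%N -> (n.+1%:R : R)^-1 < eta.
Proof.
move=> eta0.
exists (Num.truncn (eta^-1)) => n Nn.
have he : 0 < eta^-1 by rewrite invr_gt0.
have h1 := truncn_itv (ltW he).
have h2 : ((Num.truncn eta^-1).+1%:R : R) <= n.+1%:R by rewrite ler_nat ltnS.
have h3 : eta^-1 < n.+1%:R by case/andP: h1 => _ h; exact: lt_le_trans h h2.
rewrite -(invrK eta) ltf_pV2 // ?posrE ?invr_gt0 //.
Qed.
Lemma unif_q (R : realType) (E : pointedMetricType R) (F : set E) (q : R -> E -> R) :
  (forall t y, 0 < t -> F y -> forall e, 0 < e -> exists2 eta, 0 < eta &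
    forall t' y', 0 < t' -> F y' -> `|t - t'| < eta -> mdist y y' < eta ->
      `|q t y - q t' y'| < e) ->
  forall (a b : R) (K : set E), 0 < a -> compact K -> K `<=` F ->
  forall e, 0 < e -> exists2 d, 0 < d & forall t s y, a <= t <= b -> a <= s <= b -> K y ->
     `|t - s| < d -> `|q t y - q s y| < e.
Proof.
move=> hq a b K a0 cK KF e e0.
have cJK : compact (`[a, b]%classic `*` K) := compact_setX (@segment_compact R a b) cK.
move: cJK; rewrite compact_near_coveringP => /near_covering_withinP cJK.
pose P := (fun n (p : R * E) => forall s, a <= s <= b -> `|p.1 - s| < n.+1%:R^-1 ->
   `|q p.1 p.2 - q s p.2| < e).
suff [N _ HN] : \forall n \near \oo, (`[a, b]%classic `*` K) `<=` P n.
  exists (N.+1%:R^-1); first by rewrite invr_gt0.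
  move=> t s y ht hs Ky hts.
  exact: (HN N (leqnn N) (t, y) (conj ht Ky) s hs hts).
apply: cJK.
move=> [t0 y0] [/= /andP[at0 t0b] Ky0].
have t00 : 0 < t0 by apply: (lt_le_trans a0).
have [eta eta0 H] := hq t0 y0 t00 (KF _ Ky0) (e / 2) ltac:(by rewrite divr_gt0).
have [N HN] := @inv_small R (eta / 2) ltac:(by rewrite divr_gt0).
exists (ball (t0, y0) (eta / 2), [set n | (N <= n)%N]).
  split => /=; first by apply: nbhsx_ballx; rewrite divr_gt0.
  by exists N.
move=> [[t' y'] n] /= [[/= h1 h2] Nn] [/= /andP[at' t'b] Ky'] s /andP[has hsb] hts.
have hn := HN n Nn. rewrite /= in hts.
move: h1 h2; rewrite ballEmdist /= => h1 h2. move: h1; rewrite /ball /= => h1.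
have s0 : 0 < s by apply: (lt_le_trans a0).
have t'0 : 0 < t' by apply: (lt_le_trans a0).
have d1 : `|q t0 y0 - q t' y'| < e / 2.
  apply: H => //; first by apply: KF.
    lra.
  lra.
have d2 : `|q t0 y0 - q s y'| < e / 2.
  apply: H => //; first by apply: KF.
    apply: le_lt_trans (ler_distD t' t0 s) _.
    rewrite (splitr eta); apply: ltrD => //; exact: lt_trans hts hn.
  lra.
apply: le_lt_trans (ler_distD (q t0 y0) _ _) _.
rewrite (splitr e) distrC; exact: ltrD.
Qed.
Lemma int_close (d : measure_display) (T : measurableType d) (R : realType)
  (mu : {measure set T -> \bar R}) (D : set T) (f1 f2 : T -> R) (eta : R) :
  measurable D -> mu.-integrable D (EFin \o f1) -> mu.-integrable D (EFin \o f2) ->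
  0 <= eta -> (forall y, D y -> `|f1 y - f2 y| <= eta) ->
  (`|\int[mu]_(y in D) (f1 y)%:E - \int[mu]_(y in D) (f2 y)%:E| <= eta%:E * mu D)%E.
Proof.
move=> mD i1 i2 eta0 H.
rewrite -integralB_EFin //.
have [m1 _] := integrableP _ _ _ i1.
have [m2 _] := integrableP _ _ _ i2.
have mB := emeasurable_funB m1 m2.
apply: le_trans (le_abse_integral mu mD mB) _.
rewrite (eq_integral (fun x => (`|f1 x - f2 x|)%:E)); last first.
  by move=> x _; exact: erefl.
rewrite -(integral_cst mu mD).
have m1' : measurable_fun D f1 by apply/measurable_realfun.measurable_EFinP.
have m2' : measurable_fun D f2 by apply/measurable_realfun.measurable_EFinP.
apply: ge0_le_integral => //.
- apply/measurable_realfun.measurable_EFinP.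
  apply: measurableT_comp => //.
  exact: measurable_realfun.measurable_funB.
Qed.
Lemma trunc_add1 (R : realType) (y : R) : 0 <= y -> Num.truncn (y + 1) = (Num.truncn y + 1)%N.
Proof.
move=> y0; apply: truncn_def.
have /andP[h1 h2] := truncn_itv y0.
rewrite -natr1 natrD -natr1 in h2 *; apply/andP; split; lra.
Qed.
Lemma closed_meas (R : realType) (E : pointedMetricType R) (A : set (borel_of E)) :
  closed (A : set E) -> measurable A.
Proof.
move=> /closed_openC oA.
rewrite -[A]setCK; apply: measurableC; exact: sub_sigma_algebra.
Qed.
Lemma compact_meas (R : realType) (E : pointedMetricType R) (A : set (borel_of E)) :
  compact (A : set E) -> measurable A.
Proof. move=> cA; apply: closed_meas; exact: compact_closed (@metric_hausdorff _ _) cA. Qed.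
Lemma F_meas (R : realType) (E : pointedMetricType R) (F : set E) (rho : E) :
  (forall (x : E) (r : R), 0 < r -> compact (F `&` cball x r)) ->
  measurable (F : set (borel_of E)).
Proof.
move=> hc.
have -> : (F : set (borel_of E)) = \bigcup_n ((F `&` cball rho n.+1%:R) : set (borel_of E)).
  apply/seteqP; split => y.
    move=> Fy; exists (Num.truncn (mdist rho y)) => //; split => //.
    rewrite /cball /=.
    have /andP[_ h] := truncn_itv (mdist_ge0 rho y).
    exact: ltW.
  by case=> n _ [].
apply: bigcupT_measurable => n; apply: compact_meas; exact: hc.
Qed.

From mathcomp Require Import measurable_realfun.
From mathcomp Require Import ring lra.

Theorem lemma2p1 (R : realType) (E : pointedMetricType R) (F : set E)
  (nu : {measure set (borel_of E) -> \bar R}) (rho : E)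
  (q : R -> E -> R)
  (V : nat -> set E) (mu : nat -> E -> E -> R) (nbr : nat -> E -> seq E)
  (gamma : nat -> R) :
  (* setting *)
  (forall (x : E) (r : R), 0 < r -> compact (F `&` cball x r)) ->
  radon_full_support F nu ->
  F rho ->
  {within [set p : R * E | 0 < p.1 /\ F p.2], continuous (fun p : R * E => q p.1 p.2)} ->
  (forall t y, 0 < t -> F y -> 0 <= q t y) ->
  (forall t, 0 < t -> (\int[nu]_(y in F) (q t y)%:E = 1)%E) ->
  (forall n, weighted_graph (V n) (mu n) (nbr n)) ->
  (forall n, graph_connected (V n) (mu n)) ->
  (forall n, at_least_two_vertices (V n)) ->
  (forall n, V n rho) ->
  (forall n, 0 <= gamma n) ->
  gamma @ \oo --> +oo ->
  (* condition (A1)(d) *)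
  (forall a b : R, 0 < a -> a <= b -> forall x (r : R), F x -> 0 < r ->
     forall eps : R, 0 < eps -> \forall n \near \oo, forall t, a <= t <= b ->
       (`| (walk_prob (mu n) (nbr n) (Num.truncn (gamma n * t)) rho (ball x r))%:E
           - \int[nu]_(y in ball x r `&` F) (q t y)%:E | < eps%:E)%E) ->
  (* conclusion *)
  forall a b : R, 0 < a -> a <= b -> forall x (r : R), F x -> 0 < r ->
     forall eps : R, 0 < eps -> \forall n \near \oo, forall t, a <= t <= b ->
       forall i : nat, (i <= 1)%N ->
       (`| (walk_prob (mu n) (nbr n) (Num.truncn (gamma n * t) + i) rho (ball x r))%:E
           - \int[nu]_(y in ball x r `&` F) (q t y)%:E | < eps%:E)%E.
Proof.
move=> hcomp hradon Frho hq hq0 hq1 hgraph hconn htwo hV hg0 hgam hA1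
  a b a0 ab x r Fx r0 eps eps0.
have hed := qcont_ed _ _ _ _ hq.
set K := F `&` cball x r.
have cK : compact K := hcomp x r r0.
have KF : K `<=` F by move=> y [].
set D : set (borel_of E) := ball x r `&` F.
have DK : D `<=` K.
  move=> y [hb Fy]; split => //; rewrite /cball /=; move: hb; rewrite ballEmdist /= => h; exact: ltW.
have DF : D `<=` F by move=> y [].
have mK : measurable (K : set (borel_of E)) by apply: compact_meas.
have mD : measurable D.
  have -> : D = ball x r `&` (K : set (borel_of E)).
    apply/seteqP; split => y; first by move=> h; split; [case: h | exact: DK].
    by move=> [h [Fy _]].
  apply: measurableI => //; apply: sub_sigma_algebra; exact: mball_open.
have mF : measurable (F : set (borel_of E)) := F_meas _ _ _ rho hcomp.
have mqF : forall t, 0 < t -> measurable_fun (F : set (borel_of E)) (q t).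
  move=> t t0; apply: meas_g => // y Fy e e0.
  have [eta eta0 H] := hed t y t0 Fy e e0.
  exists eta => // y' Fy' hy'; apply: H => //; by rewrite subrr normr0.
have mqFE : forall t, 0 < t -> measurable_fun (F : set (borel_of E)) (fun y : borel_of E => (q t y)%:E).
  by move=> t t0; apply/measurable_realfun.measurable_EFinP; exact: mqF.
have intD : forall t, 0 < t -> nu.-integrable D (fun y : borel_of E => (q t y)%:E).
  move=> t t0; apply/integrableP; split.
    exact: measurable_funS (mqFE t t0).
  rewrite (eq_integral (fun y : borel_of E => (q t y)%:E)); last first.
    move=> y /[1!inE] Dy /=; rewrite ger0_norm //; apply: hq0 => //; exact: DF.
  have f0 : forall y : borel_of E, F y -> (0 <= (q t y)%:E)%E.
    by move=> y Fy /=; rewrite lee_fin; exact: hq0.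
  have h := ge0_subset_integral nu mD mF (mqFE t t0) f0 DF.
  apply: (le_lt_trans h).
  by rewrite hq1 // ltry.
have finD : (nu D < +oo)%E := fin_meas _ _ _ _ _ hradon cK KF _ mD DK.
set fr := fun t => fine (\int[nu]_(y in D) (q t y)%:E)%E.
have ffin : forall t, 0 < t -> (\int[nu]_(y in D) (q t y)%:E)%E = (fr t)%:E.
  by move=> t t0; rewrite /fr fineK //; exact: integrable_fin_num (intD t t0).
set N0 := fine (nu D).
have finD' : nu D = N0%:E by rewrite /N0 fineK // ge0_fin_numE // measure_ge0.
have N00 : 0 <= N0 by rewrite /N0 fine_ge0 // measure_ge0.
set eta := eps / (2 * (N0 + 1)).
have eta0 : 0 < eta by rewrite /eta divr_gt0 // mulr_gt0 //; lra.
have etaN : eta * N0 < eps / 2.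
  have h : eta * (N0 + 1) = eps / 2 by rewrite /eta; field; lra.
  lra.
have [d d0 Hd] := unif_q _ _ _ _ hed a (b + 1) K a0 cK KF eta eta0.
have eE : forall u v : R, (`|u%:E - v%:E|)%E = (`|u - v|)%:E := fun u v => erefl.
have closef : forall t s, a <= t <= b + 1 -> a <= s <= b + 1 -> `|t - s| < d ->
    `|fr t - fr s| < eps / 2.
  move=> t s ht hs hts.
  have t0 : 0 < t by case/andP: ht => h _; lra.
  have s0 : 0 < s by case/andP: hs => h _; lra.
  have := int_close _ _ _ nu D (q t) (q s) eta mD (intD t t0) (intD s s0) (ltW eta0) _.
  rewrite ffin // ffin // finD' eE -EFinM lee_fin => h.
  apply: le_lt_trans (h _) etaN.
  move=> y Dy; apply: ltW; apply: Hd => //; exact: DK.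
have H1 := hA1 a (b + 1) a0 ltac:(lra) x r Fx r0 (eps / 2) ltac:(lra).
have H2 : \forall n \near \oo, 1 + d^-1 <= gamma n by move/cvgryPge: hgam; apply.
apply: (filterS2 _ _ H1 H2) => n h1 h2 t /andP[hat htb] i i1.
have di0 : 0 < d^-1 by rewrite invr_gt0.
have g0 : 0 < gamma n by lra.
have gid : (gamma n)^-1 < d.
  rewrite -(invrK d) ltf_pV2 ?posrE //; lra.
have gi1 : (gamma n)^-1 < 1 by rewrite invf_lt1 //; lra.
have gi0 : 0 < (gamma n)^-1 by rewrite invr_gt0.
have t0 : 0 < t by lra.
have gt0 : 0 <= gamma n * t by apply: mulr_ge0; lra.
case: i i1 => [|[|//]] _.
  rewrite addn0.
  have := h1 t ltac:(apply/andP; split; lra).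
  rewrite ffin // eE lte_fin => h.
  rewrite lte_fin; lra.
set t' := t + (gamma n)^-1.
have e : gamma n * t' = gamma n * t + 1 by rewrite /t' mulrDr divff // gt_eqF.
rewrite -trunc_add1 // -e.
have t'0 : 0 < t' by rewrite /t'; lra.
have := h1 t' ltac:(apply/andP; split; rewrite /t'; lra).
rewrite ffin // eE lte_fin => h.
have hc := closef t' t ltac:(apply/andP; split; rewrite /t'; lra) ltac:(apply/andP; split; lra)
  ltac:(by rewrite /t' addrAC subrr add0r gtr0_norm).
rewrite ?lte_fin.
apply: le_lt_trans (ler_distD (fr t') _ _) _.
move: h; rewrite ffin // eE lte_fin => h.
rewrite (splitr eps); exact: ltrD h hc.
Qed.
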